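(* Let $P_X$ be a distribution on a finite alphabet $\mathsf{X}$, $\mathsf{Y}$ a finite reconstruction alphabet, and $W_{X|Y}$ a conditional distribution of $X$ given $Y$. Let $$\mathcal{A}(P_X,W_{X|Y}):=\Big\{P_Y\in\mathcal{P}(\mathsf{Y}):\ \sum_{y}P_Y(y)W_{X|Y}(x|y)=P_X(x)\ \text{for all }x\in\mathsf{X}\Big\}$$ be non-empty, let $R^\star:=\min_{P_Y\in\mathcal{A}(P_X,W_{X|Y})}I(X;Y)$ (mutual information under $P_YW_{X|Y}$), and let $P_Y\in\mathcal{A}(P_X,W_{X|Y})$ attain this minimum. Consider a sequence of $(n,\Theta_n)$ lossy compression protocols (randomized encoders $\mathcal{E}^{(n)}(m|x^n)$ and randomized decoders $\mathcal{D}^{(n)}(y^n|m)$, $m\in[\Theta_n]$) with induced joint distributions $P_{X^nY^n}(x^n,y^n)=P_X^n(x^n)\sum_m\mathcal{E}^{(n)}(m|x^n)\mathcal{D}^{(n)}(y^n|m)$ such that $\lim_{n\to\infty}\frac1n\log\Theta_n=R^\star$ and $\lim_{n\to\infty}\|P_{X^nY^n}-P_{Y^n}W^n_{X|Y}\|_{\mathrm{TV}}=0$, where $P_{Y^n}$ is the $Y^n$-marginal of $P_{X^nY^n}$ and $W^n_{X|Y}(x^n|y^n)=\prod_iW_{X|Y}(x_i|y_i)$. Let $c>0$ be a constant and $b:\mathsf{X}\to\mathbb{R}$ a function, define the distortion $d(x,y)=-c\log_2W_{X|Y}(x|y)+b(x)$ and the level $D:=\mathbb{E}[d(X,Y)]$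 with respect to $P_YW_{X|Y}$. Then the same sequence of protocols achieves the Shannon rate-distortion function of the source $P_X$ with distortion $d$ at distortion level $D$; that is, $$\lim_{n\to\infty}\mathbb{E}\Big[\frac1n\sum_{i=1}^n d(X_i,Y_i)\Big]=D,$$ where the expectation is with respect to $P_{X^nY^n}$.
   Context: $\mathcal{P}(\mathsf{Y})$ denotes the set of probability distributions on $\mathsf{Y}$; $P_X^n$ is the i.i.d. product distribution; $\|\cdot\|_{\mathrm{TV}}$ is total variation distance. The Shannon rate-distortion function of $P_X$ with distortion $d$ at level $D$ is $\min\{I(X;Y):P_{Y|X},\ \mathbb{E}[d(X,Y)]\le D\}$.
   Formalization: $W_{X|Y}(x|y)>0$ holds for every y ∈ 𝖸 and every x ∈ 𝖷 with $P_X(x)>0$, so d(x,y) is finite wherever the source has mass. The statement above fails without it. *)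

(* Defs.v *)
From HB Require Import structures.
From mathcomp Require Import all_boot all_order all_algebra.
From mathcomp Require Import all_classical all_reals all_analysis.
Set Implicit Arguments. Unset Strict Implicit. Unset Printing Implicit Defensive.
Import Order.TTheory GRing.Theory Num.Theory.
Local Open Scope ring_scope.

Section Defs.
Variable R : realType.

Definition is_pmf (T : finType) (p : T -> R) : Prop :=
  (forall t, 0 <= p t) /\ \sum_(t : T) p t = 1.

(* W x y = W_{X|Y}(x|y): a conditional distribution of X given Y *)
Definition is_channel (X Y : finType) (W : X -> Y -> R) : Prop :=
  forall y, is_pmf (fun x => W x y).

Definition admissible (X Y : finType) (PX : X -> R) (W : X -> Y -> R)
  (PY : Y -> R) : Prop :=
  is_pmf PY /\ forall x, \sum_(y : Y) PY y * W x y = PX x.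

Definition mutual_info (X Y : finType) (P : X -> Y -> R) : R :=
  \sum_(x : X) \sum_(y : Y)
     P x y * ln (P x y / ((\sum_(y' : Y) P x y') * (\sum_(x' : X) P x' y))).

Definition joint_YW (X Y : finType) (PY : Y -> R) (W : X -> Y -> R) : X -> Y -> R :=
  fun x y => PY y * W x y.

Definition iid (X : finType) (n : nat) (PX : X -> R) (xn : n.-tuple X) : R :=
  \prod_(i < n) PX (tnth xn i).

Definition prod_channel (X Y : finType) (n : nat) (W : X -> Y -> R)
  (xn : n.-tuple X) (yn : n.-tuple Y) : R :=
  \prod_(i < n) W (tnth xn i) (tnth yn i).

Definition protocol_joint (X Y : finType) (n Theta : nat) (PX : X -> R)
  (enc : n.-tuple X -> 'I_Theta -> R) (dec : 'I_Theta -> n.-tuple Y -> R)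
  (xn : n.-tuple X) (yn : n.-tuple Y) : R :=
  iid PX xn * \sum_(m < Theta) enc xn m * dec m yn.

Definition marg_Y (X Y : finType) (n : nat) (P : n.-tuple X -> n.-tuple Y -> R)
  (yn : n.-tuple Y) : R := \sum_(xn : n.-tuple X) P xn yn.

Definition tv_dist (A B : finType) (P Q : A -> B -> R) : R :=
  2^-1 * \sum_(a : A) \sum_(b : B) `|P a b - Q a b|.

Definition log_distortion (X Y : finType) (c : R) (b : X -> R) (W : X -> Y -> R)
  (x : X) (y : Y) : R :=
  - c * (ln (W x y) / ln 2) + b x.

Definition avg_distortion (X Y : finType) (n : nat) (P : n.-tuple X -> n.-tuple Y -> R)
  (d : X -> Y -> R) : R :=
  \sum_(xn : n.-tuple X) \sum_(yn : n.-tuple Y)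
     P xn yn * (n%:R^-1 * \sum_(i < n) d (tnth xn i) (tnth yn i)).

Definition exp_distortion (X Y : finType) (P : X -> Y -> R) (d : X -> Y -> R) : R :=
  \sum_(x : X) \sum_(y : Y) P x y * d x y.

End Defs.

(* Main.v *)
Require Import Defs.
From HB Require Import structures.
From mathcomp Require Import all_boot all_order all_algebra.
From mathcomp Require Import all_classical all_reals all_analysis.
From mathcomp Require Import ring lra.
Import Order.TTheory GRing.Theory Num.Theory.
Import numFieldNormedType.Exports.
Local Open Scope classical_set_scope.
Local Open Scope ring_scope.

Section Aux.
Variable R : realType.

Lemma sum_tuple_prod (X : finType) n (G : 'I_n -> X -> R) :
  \sum_(t : n.-tuple X) \prod_(j < n) G j (tnth t j) = \prod_(j < n) \sum_(a : X) G j a.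
Proof.
rewrite bigA_distr_bigA /=.
rewrite (reindex (@tuple_of_finfun X n)) /=; last first.
  by exists (@finfun_of_tuple X n) => t _; [rewrite tuple_of_finfunK|rewrite finfun_of_tupleK].
by apply: eq_bigr => f _; apply: eq_bigr => j _; rewrite tnth_mktuple.
Qed.

Lemma sum_tuple_marg (X : finType) n (F : 'I_n -> X -> R) (g : X -> R) (i : 'I_n) :
  (forall j, \sum_(a : X) F j a = 1) ->
  \sum_(t : n.-tuple X) (\prod_(j < n) F j (tnth t j)) * g (tnth t i)
  = \sum_(a : X) F i a * g a.
Proof.
move=> F1.
pose G j a := F j a * (if j == i then g a else 1).
transitivity (\sum_(t : n.-tuple X) \prod_(j < n) G j (tnth t j)).
  apply: eq_bigr => t _; rewrite /G big_split /=.
  rewrite [X in _ = _ * X](bigD1 i) //= eqxx.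
  rewrite [X in _ = _ * (_ * X)]big1 ?mulr1 //.
  by move=> j /negbTE ->.
rewrite sum_tuple_prod (bigD1 i) //=.
rewrite [X in _ * X]big1 ?mulr1.
  by apply: eq_bigr => a _; rewrite /G eqxx.
by move=> j /negbTE ji; under eq_bigr do rewrite /G ji mulr1; exact: F1.
Qed.

Lemma sum_tuple_prod1 (X : finType) n (F : 'I_n -> X -> R) :
  (forall j, \sum_(a : X) F j a = 1) ->
  \sum_(t : n.-tuple X) \prod_(j < n) F j (tnth t j) = 1.
Proof. by move=> F1; rewrite sum_tuple_prod big1. Qed.

Lemma pmf_le1' (T : finType) (Q : T -> R) y : is_pmf Q -> Q y <= 1.
Proof.
move=> [Q0 Q1]; rewrite -Q1 (bigD1 y) //= lerDl.
by apply: sumr_ge0 => z _; exact: Q0.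
Qed.

Lemma ln_prod n (F : 'I_n -> R) : (forall i, 0 < F i) ->
  0 < \prod_i F i /\ ln (\prod_i F i) = \sum_i ln (F i).
Proof.
move=> Fp; elim/big_rec2: _ => [|i a b _ [a0 hab]]; first by rewrite ln1 ltr01.
split; first exact: mulr_gt0.
by rewrite lnM ?posrE ?Fp // hab.
Qed.

Lemma prod_pos_each n (F : 'I_n -> R) : (forall i, 0 <= F i) -> 0 < \prod_i F i ->
  forall i, 0 < F i.
Proof.
move=> F0 Fp i; rewrite lt_def F0 andbT; apply/eqP => Fi0.
by move: Fp; rewrite (bigD1 i) //= Fi0 mul0r ltxx.
Qed.

Lemma ln_le_sub1 (t : R) : 0 < t -> ln t <= t - 1.
Proof. by move=> t0; have := @le_ln1Dx R (t - 1); rewrite addrCA subrr addr0; apply; lra. Qed.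

Lemma mi_adm (X Y : finType) (PX : X -> R) (W : X -> Y -> R) (Q : Y -> R) :
  is_channel W -> admissible PX W Q ->
  mutual_info (joint_YW Q W) =
  \sum_y Q y * (\sum_x W x y * ln (W x y)) - \sum_x PX x * ln (PX x).
Proof.
move=> HW [[Q0 Q1] HA].
rewrite /mutual_info /joint_YW.
transitivity (\sum_x \sum_y (Q y * (W x y * ln (W x y)) - Q y * W x y * ln (PX x))).
  apply: eq_bigr => x _; apply: eq_bigr => y _.
  rewrite HA.
  have -> : \sum_x' Q y * W x' y = Q y by rewrite -mulr_sumr (HW y).2 mulr1.
  have W0 : 0 <= W x y := (HW y).1 x.
  have [->|Qy] := eqVneq (Q y) 0; first by rewrite !mul0r subr0.
  have [->|Wxy] := eqVneq (W x y) 0; first by rewrite !(mulr0, mul0r) subr0.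
  have Qp : 0 < Q y by rewrite lt_def Qy Q0.
  have Wp : 0 < W x y by rewrite lt_def Wxy W0.
  have PXp : 0 < PX x.
    rewrite -HA (bigD1 y) //=; apply: ltr_pwDl; first exact: mulr_gt0.
    by apply: sumr_ge0 => z _; apply: mulr_ge0 => //; exact: (HW z).1.
  have -> : Q y * W x y / (PX x * Q y) = W x y / PX x.
    by field; apply/andP; split; rewrite gt_eqF.
  rewrite ln_div ?posrE //; ring.
under eq_bigr do rewrite sumrB; rewrite sumrB; congr (_ - _).
  by rewrite exchange_big /=; apply: eq_bigr => y _; rewrite mulr_sumr.
apply: eq_bigr => x _; rewrite -mulr_suml HA //.
Qed.

Lemma sum2_lin (A B : finType) (a b c d : A -> B -> R) :
  \sum_(x : A) \sum_(y : B) (a x y + b x y + c x y - d x y) =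
  \sum_(x : A) \sum_(y : B) a x y + \sum_(x : A) \sum_(y : B) b x y
  + \sum_(x : A) \sum_(y : B) c x y - \sum_(x : A) \sum_(y : B) d x y.
Proof.
rewrite -!big_split /= -sumrB; apply: eq_bigr => x _.
by rewrite -!big_split /= -sumrB.
Qed.

Lemma ind_sumr (T : finType) (F : T -> R) (a : T) :
  \sum_(x : T) F x * (x == a)%:R = F a.
Proof.
rewrite (bigD1 a) //= eqxx mulr1 big1 ?addr0 // => x /negbTE ->; by rewrite mulr0.
Qed.

Lemma ind_suml (T : finType) (F : T -> R) (a : T) :
  \sum_(x : T) (a == x)%:R * F x = F a.
Proof.
rewrite (bigD1 a) //= eqxx mul1r big1 ?addr0 // => x; rewrite eq_sym => /negbTE ->; by rewrite mul0r.
Qed.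

Lemma sum2_aff (A B : finType) (c1 c2 : R) (F H : A -> B -> R) :
  \sum_(x : A) \sum_(y : B) (c1 * F x y + c2 * H x y) =
  c1 * \sum_(x : A) \sum_(y : B) F x y + c2 * \sum_(x : A) \sum_(y : B) H x y.
Proof.
rewrite !mulr_sumr -big_split /=; apply: eq_bigr => x _.
by rewrite !mulr_sumr -big_split.
Qed.

End Aux.

Section S.
Variable R : realType.
Variables (Y : finType).
Local Notation T := {ptws Y -> R}.

Lemma lin_cont (w : Y -> R) : continuous (fun f : T => \sum_(y : Y) f y * w y).
Proof.
move=> f.
suff H : forall s : seq Y, (fun g : T => \sum_(y <- s) g y * w y) @ f --> \sum_(y <- s) f y * w y.
  exact: H.
elim => [|a s IH].
  have -> : (fun g : T => \sum_(y <- [::]) g y * w y) = fun=> 0.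
    by apply: funext => g; rewrite big_nil.
  rewrite big_nil; exact: (@cvg_cst R 0 T (nbhs f) (@nbhs_filter T f)).
have -> : (fun g : T => \sum_(z <- a :: s) g z * w z) =
   (fun g : T => g a * w a) + (fun g : T => \sum_(z <- s) g z * w z).
  by apply: funext => g; rewrite big_cons.
rewrite big_cons.
have FF := @nbhs_filter T f.
apply: (@cvgD _ _ _ _ FF) => //; apply: (@cvgMr_tmp _ _ _ FF).
exact: (@proj_continuous Y (fun _ => R) a f).
Qed.

Lemma closed_lin_le (w : Y -> R) (a : R) :
  closed [set f : T | \sum_(y : Y) f y * w y <= a].
Proof.
have := @preimage_closed T R (fun f : T => \sum_(y : Y) f y * w y) [set x | x <= a]
  (fun f _ => lin_cont w f) (@closed_le R a).
by [].
Qed.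

Lemma closed_lin_ge (w : Y -> R) (a : R) :
  closed [set f : T | a <= \sum_(y : Y) f y * w y].
Proof.
have := @preimage_closed T R (fun f : T => \sum_(y : Y) f y * w y) [set x | a <= x]
  (fun f _ => lin_cont w f) (@closed_ge R a).
by [].
Qed.

Lemma compact_box : compact [set f : T | forall y, (0 <= f y <= 1)].
Proof.
have := @tychonoff Y (fun _ => R) (fun _ => [set` `[(0:R), 1]]) (fun _ => @segment_compact R 0 1).
suff -> : [set f : T | forall y, (0 <= f y <= 1)] = [set f : T | forall y, [set` `[(0:R), 1]] (f y)] by [].
by apply: funext => f /=; apply: propext; split => H y; move: (H y); rewrite /= in_itv.
Qed.

Lemma cluster_closed (F : set_system T) (p : T) (C : set T) :
  cluster F p -> F C -> closed C -> C p.
Proof.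
move=> cp FC cC; rewrite clusterE in cp.
have := cp C FC; by rewrite -(closure_id C).1.
Qed.


Lemma cl_le (F : set_system T) (p : T) (w : Y -> R) (a : R) :
  cluster F p -> F [set f : T | \sum_(y : Y) f y * w y <= a] -> \sum_(y : Y) p y * w y <= a.
Proof. move=> cp FC; exact: (@cluster_closed F p _ cp FC (closed_lin_le w a)). Qed.

Lemma cl_ge (F : set_system T) (p : T) (w : Y -> R) (a : R) :
  cluster F p -> F [set f : T | a <= \sum_(y : Y) f y * w y] -> a <= \sum_(y : Y) p y * w y.
Proof. move=> cp FC; exact: (@cluster_closed F p _ cp FC (closed_lin_ge w a)). Qed.

Lemma pmf_le1 (Q : Y -> R) y : is_pmf Q -> Q y <= 1.
Proof.
move=> [Q0 Q1]; rewrite -Q1 (bigD1 y) //= lerDl.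
by apply: sumr_ge0 => z _; exact: Q0.
Qed.

Lemma lp_stab (X : finType) (W : X -> Y -> R) (PX : X -> R) (k : Y -> R) (v : R) :
  (forall Q : Y -> R, is_pmf Q -> (forall x, \sum_y Q y * W x y = PX x) ->
     v <= \sum_y Q y * k y) ->
  forall e, 0 < e -> exists2 d, 0 < d & forall Q : Y -> R, is_pmf Q ->
     (forall x, `|\sum_y Q y * W x y - PX x| <= d) -> v - e <= \sum_y Q y * k y.
Proof.
move=> H e e0; apply: contrapT => Hn.
have Hq : forall m : nat, exists Q : Y -> R, [/\ is_pmf Q,
    (forall x, `|\sum_y Q y * W x y - PX x| <= m.+1%:R^-1) & \sum_y Q y * k y < v - e].
  move=> m; apply: contrapT => Hm; apply: Hn; exists m.+1%:R^-1 => // Q Qp Qa.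
  rewrite leNgt; apply/negP => lt; apply: Hm; by exists Q.
have [Qs HQs] := choice Hq.
pose F := ((Qs : nat -> T) @ \oo).
have PF : ProperFilter F by exact: fmap_proper_filter.
have Fall : forall S : set T, (forall m, S (Qs m)) -> F S.
  by move=> S h; exists 0%N => // m _; exact: h.
have FK : F [set f : T | forall y, (0 <= f y <= 1)].
  apply: Fall => m y; case: (HQs m) => Qp _ _.
  by rewrite (pmf_le1 _ y Qp) andbT; case: Qp.
have := @compact_box F PF FK.
case=> p [Kp cp].
have S1 : \sum_y p y * 1 = 1.
  apply/le_anti/andP; split.
    apply: (@cl_le _ _ (fun=> 1) _ cp).
    by apply: Fall => m /=; case: (HQs m) => -[_ Q1] _ _; under eq_bigr do rewrite mulr1; rewrite Q1.
  apply: (@cl_ge _ _ (fun=> 1) _ cp).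
  by apply: Fall => m /=; case: (HQs m) => -[_ Q1] _ _; under eq_bigr do rewrite mulr1; rewrite Q1.
have Sk : \sum_y p y * k y <= v - e.
  apply: (@cl_le _ _ k _ cp).
  by apply: Fall => m /=; case: (HQs m) => _ _ /ltW.
have Adm : forall x, \sum_y p y * W x y = PX x.
  move=> x; apply/le_anti/andP; split.
    apply/ler_addgt0Pr => d d0.
    apply: (@cl_le _ _ (W x) _ cp).
    apply: (filterS _ (near_infty_natSinv_lt (PosNum d0))) => m /= hm.
    have hm' : m.+1%:R^-1 < d := hm.
    case: (HQs m) => _ /(_ x) hx _.
    move: hx; rewrite ler_norml => /andP[h1 h2].
    move: hm' h1 h2; set r := m.+1%:R^-1; set z := \sum_y _; lra.
  apply/ler_addgt0Pr => d d0; rewrite -lerBlDr.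
  apply: (@cl_ge _ _ (W x) _ cp).
  apply: (filterS _ (near_infty_natSinv_lt (PosNum d0))) => m /= hm.
  have hm' : m.+1%:R^-1 < d := hm.
  case: (HQs m) => _ /(_ x) hx _.
  move: hx; rewrite ler_norml => /andP[h1 h2].
  move: hm' h1 h2; set r := m.+1%:R^-1; set z := \sum_y _; lra.
have pp : is_pmf p.
  split; first by move=> y; case/andP: (Kp y).
  by rewrite -S1; apply: eq_bigr => y _; rewrite mulr1.
have := H p pp Adm; lra.
Qed.
End S.


Section PerN.
Variable R : realType.
Variables (X Y : finType) (PX : X -> R) (W : X -> Y -> R) (n Th : nat)
  (enc : n.-tuple X -> 'I_Th -> R) (dec : 'I_Th -> n.-tuple Y -> R).
Hypotheses (HPX : is_pmf PX) (HW : is_channel W) (He : forall xn, is_pmf (enc xn))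
  (Hd : forall m, is_pmf (dec m)) (Hpos : forall x y, 0 < PX x -> 0 < W x y).

Local Notation TX := (n.-tuple X).
Local Notation TY := (n.-tuple Y).
Let P := protocol_joint PX enc dec.
Let s xn yn := \sum_(m < Th) enc xn m * dec m yn.
Let f := @prod_channel R X Y n W.
Let G (xn : n.-tuple X) (yn : n.-tuple Y) := \sum_(i < n) ln (W (tnth xn i) (tnth yn i)).
Let mY := marg_Y P.

Lemma W0 x y : 0 <= W x y. Proof. exact: (HW y).1. Qed.
Lemma PX0 x : 0 <= PX x. Proof. exact: HPX.1. Qed.

Lemma s_ge0 (xn : TX) (yn : TY) : 0 <= s xn yn.
Proof. apply: sumr_ge0 => m _; apply: mulr_ge0; [exact: (He xn).1|exact: (Hd m).1]. Qed.

Lemma iid_ge0 (xn : TX) : 0 <= iid PX xn.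
Proof. by apply: prodr_ge0 => i _; exact: PX0. Qed.

Lemma f_ge0 (xn : TX) (yn : TY) : 0 <= f xn yn.
Proof. by apply: prodr_ge0 => i _; exact: W0. Qed.

Lemma P_ge0 (xn : TX) (yn : TY) : 0 <= P xn yn.
Proof. exact: mulr_ge0 (iid_ge0 _) (s_ge0 _ _). Qed.

Lemma sum_s (xn : TX) : \sum_(yn : TY) s xn yn = 1.
Proof.
rewrite /s exchange_big /= -(He xn).2; apply: eq_bigr => m _.
by rewrite -mulr_sumr (Hd m).2 mulr1.
Qed.

Lemma sumP_y (xn : TX) : \sum_(yn : TY) P xn yn = iid PX xn.
Proof. by rewrite /P /protocol_joint -mulr_sumr sum_s mulr1. Qed.

Lemma iid_marg (g : X -> R) (i : 'I_n) : \sum_(xn : TX) iid PX xn * g (tnth xn i) = \sum_a PX a * g a.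
Proof. exact: (@sum_tuple_marg R X n (fun _ => PX) g i (fun _ => HPX.2)). Qed.

Lemma sum_iid : \sum_(xn : TX) iid PX xn = 1.
Proof. exact: (@sum_tuple_prod1 R X n (fun _ => PX) (fun _ => HPX.2)). Qed.

Lemma sumP : \sum_(xn : TX) \sum_(yn : TY) P xn yn = 1.
Proof. by under eq_bigr do rewrite sumP_y; exact: sum_iid. Qed.

Lemma f_sum (yn : TY) : \sum_(xn : TX) f xn yn = 1.
Proof.
exact: (@sum_tuple_prod1 R X n (fun j a => W a (tnth yn j)) (fun j => (HW _).2)).
Qed.

Lemma f_marg (yn : TY) (g : X -> R) (i : 'I_n) :
  \sum_(xn : TX) f xn yn * g (tnth xn i) = \sum_a W a (tnth yn i) * g a.
Proof.
exact: (@sum_tuple_marg R X n (fun j a => W a (tnth yn j)) g i (fun j => (HW _).2)).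
Qed.

Lemma mY_ge0 (yn : TY) : 0 <= mY yn.
Proof. by apply: sumr_ge0 => xn _; exact: P_ge0. Qed.

Lemma sum_mY : \sum_(yn : TY) mY yn = 1.
Proof. by rewrite /mY /marg_Y exchange_big /=; exact: sumP. Qed.


Lemma Th_pos : (0 < Th)%N.
Proof.
case: (pickP (@predT X)) => [x0 _|H]; last first.
  by have := HPX.2; rewrite big_pred0 // => /eqP; rewrite eq_sym oner_eq0.
case: (pickP (@predT 'I_Th)) => [m _|H]; first exact: (leq_ltn_trans (leq0n m) (ltn_ord m)).
by have := (He (nseq_tuple n x0)).2; rewrite big_pred0 // => /eqP; rewrite eq_sym oner_eq0.
Qed.

Lemma iid_ln : \sum_(xn : TX) iid PX xn * ln (iid PX xn) = n%:R * \sum_a PX a * ln (PX a).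
Proof.
transitivity (\sum_(xn : TX) \sum_(i < n) iid PX xn * ln (PX (tnth xn i))).
  apply: eq_bigr => xn _.
  have [->|i0] := eqVneq (iid PX xn) 0.
    by rewrite mul0r big1 // => i _; rewrite mul0r.
  have ip : 0 < iid PX xn by rewrite lt_def i0 iid_ge0.
  have PXp := @prod_pos_each R n (fun i => PX (tnth xn i)) (fun i => PX0 _) ip.
  have [_ ->] := @ln_prod R n _ PXp.
  by rewrite mulr_sumr.
rewrite exchange_big /=.
under eq_bigr do rewrite (iid_marg (fun a => ln (PX a))).
by rewrite sumr_const card_ord mulr_natl.
Qed.

Lemma sf_le : \sum_(xn : TX) \sum_(yn : TY) s xn yn * f xn yn <= Th%:R.
Proof.
apply: (@le_trans _ _ (\sum_(xn : TX) \sum_(yn : TY) (\sum_(m < Th) dec m yn) * f xn yn)).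
  apply: ler_sum => xn _; apply: ler_sum => yn _; apply: ler_wpM2r; first exact: f_ge0.
  apply: ler_sum => m _; apply: ler_piMl; first exact: (Hd m).1.
  exact: pmf_le1' (He xn).
rewrite exchange_big /=.
under eq_bigr do rewrite -mulr_sumr f_sum mulr1.
rewrite exchange_big /=.
under eq_bigr do rewrite (Hd _).2.
by rewrite sumr_const card_ord.
Qed.

Lemma upper : \sum_(xn : TX) \sum_(yn : TY) P xn yn * G xn yn <=
  n%:R * \sum_a PX a * ln (PX a) + ln Th%:R.
Proof.
have ThR : 0 < Th%:R :> R by rewrite ltr0n Th_pos.
have pt : forall (xn : TX) (yn : TY), P xn yn * G xn yn <= P xn yn * ln (iid PX xn)
    + P xn yn * ln Th%:R + s xn yn * f xn yn / Th%:R - P xn yn.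
  move=> xn yn.
  have [P0|Pn0] := eqVneq (P xn yn) 0.
    rewrite P0 !mul0r subr0 !add0r; apply: divr_ge0 (ltW ThR).
    exact: mulr_ge0 (s_ge0 _ _) (f_ge0 _ _).
  have Pp : 0 < P xn yn by rewrite lt_def Pn0 P_ge0.
  have PE : P xn yn = iid PX xn * s xn yn by [].
  have ip : 0 < iid PX xn.
    by rewrite lt_def iid_ge0 andbT; apply: contra Pn0 => /eqP i0; rewrite PE i0 mul0r.
  have sp : 0 < s xn yn.
    by rewrite lt_def s_ge0 andbT; apply: contra Pn0 => /eqP i0; rewrite PE i0 mulr0.
  have PXp := @prod_pos_each R n (fun i => PX (tnth xn i)) (fun i => PX0 _) ip.
  have Wp : forall i, 0 < W (tnth xn i) (tnth yn i) by move=> i; apply: Hpos.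
  have [fp fG] := @ln_prod R n _ Wp.
  have [_ iG] := @ln_prod R n _ PXp.
  have fE : f xn yn = \prod_i W (tnth xn i) (tnth yn i) by [].
  have iE : iid PX xn = \prod_i PX (tnth xn i) by [].
  set t := f xn yn / (iid PX xn * Th%:R).
  have tp : 0 < t by rewrite /t divr_gt0 // ?fE // mulr_gt0.
  have lt := @ln_le_sub1 R _ tp.
  have lnt : ln t = G xn yn - ln (iid PX xn) - ln Th%:R.
    rewrite /t ln_div ?posrE ?fE ?mulr_gt0 // lnM ?posrE // fG /G; ring.
  have Pt : P xn yn * t = s xn yn * f xn yn / Th%:R.
    rewrite PE /t; field; apply/andP; split; rewrite gt_eqF //.
  have := ler_wpM2l (ltW Pp) lt; rewrite lnt !mulrBr mulr1 Pt; lra.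
apply: (@le_trans _ _ (\sum_(xn : TX) \sum_(yn : TY) (P xn yn * ln (iid PX xn)
    + P xn yn * ln Th%:R + s xn yn * f xn yn / Th%:R - P xn yn))).
  by apply: ler_sum => xn _; apply: ler_sum => yn _; exact: pt.
rewrite sum2_lin.
have E1 : \sum_(xn : TX) \sum_(yn : TY) P xn yn * ln (iid PX xn) = n%:R * \sum_a PX a * ln (PX a).
  by rewrite -iid_ln; apply: eq_bigr => xn _; rewrite -mulr_suml sumP_y.
have E2 : \sum_(xn : TX) \sum_(yn : TY) P xn yn * ln Th%:R = ln Th%:R.
  by rewrite -[RHS]mul1r -sumP mulr_suml; apply: eq_bigr => xn _; rewrite mulr_suml.
have E3 : \sum_(xn : TX) \sum_(yn : TY) s xn yn * f xn yn / Th%:R <= 1.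
  have : \sum_(xn : TX) \sum_(yn : TY) s xn yn * f xn yn / Th%:R =
     (\sum_(xn : TX) \sum_(yn : TY) s xn yn * f xn yn) / Th%:R.
    by rewrite mulr_suml; apply: eq_bigr => xn _; rewrite mulr_suml.
  by move=> ->; rewrite ler_pdivrMr // mul1r; exact: sf_le.
rewrite E1 E2 sumP; lra.
Qed.


Let k (y : Y) := \sum_a W a y * ln (W a y).
Let M := \sum_a \sum_y `|ln (W a y)|.
Let Dn := \sum_(xn : TX) \sum_(yn : TY) `|P xn yn - mY yn * f xn yn|.

Lemma lnW_le a y : `|ln (W a y)| <= M.
Proof.
rewrite /M (bigD1 a) //= (bigD1 y) //= -addrA lerDl.
apply: addr_ge0; first by apply: sumr_ge0 => *.
by apply: sumr_ge0 => *; apply: sumr_ge0 => *.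
Qed.

Lemma G_le (xn : TX) (yn : TY) : `|G xn yn| <= n%:R * M.
Proof.
apply: (le_trans (ler_norm_sum _ _ _)).
apply: (@le_trans _ _ (\sum_(i < n) M)); first by apply: ler_sum => i _; exact: lnW_le.
by rewrite sumr_const card_ord mulr_natl.
Qed.

Lemma M_ge0 : 0 <= M.
Proof. by apply: sumr_ge0 => *; apply: sumr_ge0 => *. Qed.

Lemma Dn_ge0 : 0 <= Dn.
Proof. by apply: sumr_ge0 => *; apply: sumr_ge0 => *. Qed.

Lemma lowerG : \sum_(xn : TX) \sum_(yn : TY) mY yn * f xn yn * G xn yn - n%:R * M * Dn <=
  \sum_(xn : TX) \sum_(yn : TY) P xn yn * G xn yn.
Proof.
rewrite lerBlDr addrC -lerBlDr.
have -> : n%:R * M * Dn = \sum_(xn : TX) \sum_(yn : TY) `|P xn yn - mY yn * f xn yn| * (n%:R * M).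
  by rewrite mulrC /Dn mulr_suml; apply: eq_bigr => xn _; rewrite mulr_suml.
rewrite -sumrB; apply: ler_sum => xn _; rewrite -sumrB; apply: ler_sum => yn _.
rewrite -mulrBl.
have h : `|(mY yn * f xn yn - P xn yn) * G xn yn| <= `|P xn yn - mY yn * f xn yn| * (n%:R * M).
  by rewrite normrM distrC; apply: ler_wpM2l => //; exact: G_le.
by move: h; rewrite ler_norml => /andP[].
Qed.

Lemma QG : (0 < n)%N -> exists Q : Y -> R, [/\ is_pmf Q,
  (forall a, `|\sum_y Q y * W a y - PX a| <= Dn) &
  \sum_(xn : TX) \sum_(yn : TY) mY yn * f xn yn * G xn yn = n%:R * \sum_y Q y * k y].
Proof.
move=> n0.
have nR : n%:R != 0 :> R by rewrite pnatr_eq0 -lt0n.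
pose Q (y : Y) := n%:R^-1 * \sum_(i < n) \sum_(yn : TY) mY yn * (tnth yn i == y)%:R.
exists Q; split.
- split.
    move=> y; apply: mulr_ge0; first by rewrite invr_ge0 ler0n.
    by apply: sumr_ge0 => i _; apply: sumr_ge0 => yn _; apply: mulr_ge0 (mY_ge0 _) (ler0n _ _).
  rewrite /Q -mulr_sumr exchange_big /=.
  have -> : \sum_(i < n) \sum_y \sum_(yn : TY) mY yn * (tnth yn i == y)%:R = \sum_(i < n) 1.
    apply: eq_bigr => i _; rewrite exchange_big /= -[RHS]sum_mY; apply: eq_bigr => yn _.
    rewrite -mulr_sumr.
    have -> : \sum_y (tnth yn i == y)%:R = 1 :> R.
      rewrite (eq_bigr (fun y => (tnth yn i == y)%:R * 1)); first exact: ind_suml.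
      by move=> y _; rewrite mulr1.
    by rewrite mulr1.
  by rewrite sumr_const card_ord mulVf.
- move=> a.
  have E1 : forall i : 'I_n, \sum_(yn : TY) mY yn * W a (tnth yn i) =
      \sum_(xn : TX) \sum_(yn : TY) mY yn * f xn yn * (tnth xn i == a)%:R.
    move=> i; rewrite exchange_big /=; apply: eq_bigr => yn _.
    rewrite (eq_bigr (fun xn => mY yn * (f xn yn * (tnth xn i == a)%:R))); last by move=> *; rewrite mulrA.
    by rewrite -mulr_sumr (f_marg yn (fun x => (x == a)%:R)) (@ind_sumr R _ (fun x => W x (tnth yn i))).
  have E2 : forall i : 'I_n, PX a =
      \sum_(xn : TX) \sum_(yn : TY) P xn yn * (tnth xn i == a)%:R.
    move=> i; rewrite -(@ind_sumr R _ PX a) -(iid_marg (fun x => (x == a)%:R) i).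
    by apply: eq_bigr => xn _; rewrite -mulr_suml sumP_y.
  have E3 : \sum_y Q y * W a y = n%:R^-1 * \sum_(i < n) \sum_(yn : TY) mY yn * W a (tnth yn i).
    rewrite /Q; under eq_bigr do rewrite -mulrA; rewrite -mulr_sumr; congr (_ * _).
    under eq_bigr do rewrite mulr_suml; rewrite exchange_big /=; apply: eq_bigr => i _.
    under eq_bigr do rewrite mulr_suml; rewrite exchange_big /=; apply: eq_bigr => yn _.
    rewrite (eq_bigr (fun y => mY yn * ((tnth yn i == y)%:R * W a y))); last by move=> *; rewrite mulrA.
    by rewrite -mulr_sumr (@ind_suml R _ (fun y => W a y) (tnth yn i)).
  have E4 : PX a = n%:R^-1 * \sum_(i < n) PX a.
    by rewrite sumr_const card_ord -[PX a *+ n]mulr_natl mulrA mulVf // mul1r.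
  rewrite E3 [X in _ - X]E4 -mulrBr -sumrB normrM ger0_norm ?invr_ge0 ?ler0n //.
  rewrite ler_pdivrMl ?ltr0n //.
  apply: (le_trans (ler_norm_sum _ _ _)).
  have -> : n%:R * Dn = \sum_(i < n) Dn by rewrite sumr_const card_ord mulr_natl.
  apply: ler_sum => i _; rewrite (E1 i) (E2 i) -sumrB.
  apply: (le_trans (ler_norm_sum _ _ _)); apply: ler_sum => xn _.
  rewrite -sumrB; apply: (le_trans (ler_norm_sum _ _ _)); apply: ler_sum => yn _.
  rewrite -mulrBl normrM distrC.
  by apply: ler_piMr => //; case: (tnth xn i == a); rewrite ?normr1 ?normr0.
- have R1 : n%:R * \sum_y Q y * k y = \sum_(i < n) \sum_(yn : TY) mY yn * k (tnth yn i).
    rewrite /Q; under eq_bigr do rewrite -mulrA.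
    rewrite -mulr_sumr mulrA mulfV // mul1r.
    under eq_bigr do rewrite mulr_suml.
    rewrite exchange_big /=; apply: eq_bigr => i _.
    under eq_bigr do rewrite mulr_suml.
    rewrite exchange_big /=; apply: eq_bigr => yn _.
    rewrite (eq_bigr (fun y => mY yn * ((tnth yn i == y)%:R * k y))); last by move=> *; rewrite mulrA.
    by rewrite -mulr_sumr (@ind_suml R _ k (tnth yn i)).
  rewrite R1 exchange_big [RHS]exchange_big /=; apply: eq_bigr => yn _.
  rewrite /G; under eq_bigr do rewrite mulr_sumr.
  rewrite exchange_big /=; apply: eq_bigr => i _.
  rewrite (eq_bigr (fun xn => mY yn * (f xn yn * ln (W (tnth xn i) (tnth yn i))))); last by move=> *; rewrite mulrA.
  by rewrite -mulr_sumr (f_marg yn (fun x => ln (W x (tnth yn i)))).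
Qed.


Lemma avg_eq (c : R) (b : X -> R) : (0 < n)%N ->
  avg_distortion P (log_distortion c b W) =
  (- c / ln 2) * (n%:R^-1 * \sum_(xn : TX) \sum_(yn : TY) P xn yn * G xn yn) + \sum_a PX a * b a.
Proof.
move=> n0.
have nR : n%:R != 0 :> R by rewrite pnatr_eq0 -lt0n.
rewrite /avg_distortion /log_distortion.
transitivity (\sum_(xn : TX) \sum_(yn : TY) ((- c / ln 2 * n%:R^-1) * (P xn yn * G xn yn)
   + n%:R^-1 * (P xn yn * \sum_(i < n) b (tnth xn i)))).
  apply: eq_bigr => xn _; apply: eq_bigr => yn _.
  rewrite big_split /= -mulr_sumr -mulr_suml /G; ring.
rewrite sum2_aff mulrA; congr (_ + _).
have -> : \sum_(xn : TX) \sum_(yn : TY) (P xn yn * \sum_(i < n) b (tnth xn i)) =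
   \sum_(xn : TX) iid PX xn * \sum_(i < n) b (tnth xn i).
  by apply: eq_bigr => xn _; rewrite -mulr_suml sumP_y.
under eq_bigr do rewrite mulr_sumr.
rewrite exchange_big /=.
under eq_bigr do rewrite (iid_marg b).
by rewrite sumr_const card_ord -[X in _ * X]mulr_natl mulrA mulVf // mul1r.
Qed.


Lemma bounds : (0 < n)%N ->
  n%:R^-1 * \sum_(xn : TX) \sum_(yn : TY) P xn yn * G xn yn <=
    \sum_a PX a * ln (PX a) + ln Th%:R / n%:R /\
  exists Q : Y -> R, [/\ is_pmf Q,
    (forall a, `|\sum_y Q y * W a y - PX a| <= 2 * tv_dist P (fun xn yn => mY yn * f xn yn)) &
    \sum_y Q y * k y - M * (2 * tv_dist P (fun xn yn => mY yn * f xn yn)) <=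
    n%:R^-1 * \sum_(xn : TX) \sum_(yn : TY) P xn yn * G xn yn].
Proof.
move=> n0.
have nR : n%:R != 0 :> R by rewrite pnatr_eq0 -lt0n.
have nRp : 0 < n%:R^-1 :> R by rewrite invr_gt0 ltr0n.
have Dtv : Dn = 2 * tv_dist P (fun xn yn => mY yn * f xn yn).
  by rewrite /tv_dist mulrA mulfV ?mul1r // pnatr_eq0.
split.
  have h := ler_wpM2l (ltW nRp) upper.
  apply: (le_trans h); rewrite mulrDr mulrA mulVf // mul1r [_ * ln _]mulrC.
  by [].
have [Q [Qp Qa QE]] := QG n0.
exists Q; split => //.
  by move=> a; rewrite -Dtv.
have L := lowerG; rewrite QE -mulrA -mulrBr in L.
have h := ler_wpM2l (ltW nRp) L.
apply: (le_trans _ h); rewrite mulKf // Dtv.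
by [].
Qed.

End PerN.

Definition uavg (R : realType) (X Y : finType) (PX : X -> R) (W : X -> Y -> R) (n Th : nat)
  (enc : n.-tuple X -> 'I_Th -> R) (dec : 'I_Th -> n.-tuple Y -> R) : R :=
  n%:R^-1 * \sum_(xn : n.-tuple X) \sum_(yn : n.-tuple Y)
     protocol_joint PX enc dec xn yn * \sum_(i < n) ln (W (tnth xn i) (tnth yn i)).

Definition kk (R : realType) (X Y : finType) (W : X -> Y -> R) (y : Y) : R :=
  \sum_a W a y * ln (W a y).
Definition MM (R : realType) (X Y : finType) (W : X -> Y -> R) : R :=
  \sum_a \sum_y `|ln (W a y)|.

Arguments kk {R X Y} W y.
Arguments MM {R X Y} W.
Arguments uavg {R X Y} PX W {n Th} enc dec.

Lemma MM_ge0 (R : realType) (X Y : finType) (W : X -> Y -> R) : 0 <= MM W.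
Proof. by apply: sumr_ge0 => *; apply: sumr_ge0 => *. Qed.

Lemma bounds' (R : realType) (X Y : finType) (PX : X -> R) (W : X -> Y -> R) (n Th : nat)
  (enc : n.-tuple X -> 'I_Th -> R) (dec : 'I_Th -> n.-tuple Y -> R) :
  is_pmf PX -> is_channel W -> (forall xn, is_pmf (enc xn)) -> (forall m, is_pmf (dec m)) ->
  (forall x y, 0 < PX x -> 0 < W x y) -> (0 < n)%N ->
  uavg PX W enc dec <= \sum_a PX a * ln (PX a) + ln Th%:R / n%:R /\
  exists Q : Y -> R, [/\ is_pmf Q,
    (forall a, `|\sum_y Q y * W a y - PX a| <=
       2 * tv_dist (protocol_joint PX enc dec)
         (fun xn yn => marg_Y (protocol_joint PX enc dec) yn * prod_channel W xn yn)) &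
    \sum_y Q y * kk W y - MM W * (2 * tv_dist (protocol_joint PX enc dec)
         (fun xn yn => marg_Y (protocol_joint PX enc dec) yn * prod_channel W xn yn)) <=
    uavg PX W enc dec].
Proof. move=> *; exact: bounds. Qed.

Lemma avg_eq' (R : realType) (X Y : finType) (PX : X -> R) (W : X -> Y -> R) (n Th : nat)
  (enc : n.-tuple X -> 'I_Th -> R) (dec : 'I_Th -> n.-tuple Y -> R) (c : R) (b : X -> R) :
  is_pmf PX -> (forall xn, is_pmf (enc xn)) -> (forall m, is_pmf (dec m)) -> (0 < n)%N ->
  avg_distortion (protocol_joint PX enc dec) (log_distortion c b W) =
  (- c / ln 2) * uavg PX W enc dec + \sum_a PX a * b a.
Proof. move=> *; exact: avg_eq. Qed.

Lemma exp_eq (R : realType) (X Y : finType) (PX : X -> R) (W : X -> Y -> R) (PY : Y -> R)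
  (c : R) (b : X -> R) : admissible PX W PY ->
  exp_distortion (joint_YW PY W) (log_distortion c b W) =
  (- c / ln 2) * \sum_y PY y * kk W y + \sum_a PX a * b a.
Proof.
move=> [_ HA]; rewrite /exp_distortion /log_distortion /joint_YW.
have E : forall x, \sum_y PY y * W x y * (- c * (ln (W x y) / ln 2) + b x) =
    (- c / ln 2) * \sum_y PY y * (W x y * ln (W x y)) + PX x * b x.
  move=> x; rewrite -HA mulr_suml mulr_sumr -big_split /=; apply: eq_bigr => y _; ring.
rewrite (eq_bigr _ (fun x _ => E x)) big_split /= -mulr_sumr exchange_big /=.
congr (_ * _ + _); apply: eq_bigr => y _; rewrite /kk mulr_sumr.
by apply: eq_bigr => x _; rewrite mulrA.
Qed.

Arguments mi_adm {R X Y PX W Q}.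
Arguments lp_stab {R Y X W PX k v}.
Arguments bounds' {R X Y PX W n Th enc dec}.
Arguments avg_eq' {R X Y PX W n Th enc dec} c b.
Arguments exp_eq {R X Y PX W PY} c b.
Arguments MM_ge0 {R X Y} W.

Theorem theorem4 (R : realType) (X Y : finType)
  (PX : X -> R) (W : X -> Y -> R) (PY : Y -> R)
  (Theta : nat -> nat)
  (enc : forall n : nat, n.-tuple X -> 'I_(Theta n) -> R)
  (dec : forall n : nat, 'I_(Theta n) -> n.-tuple Y -> R)
  (c : R) (b : X -> R) :
  is_pmf PX ->
  is_channel W ->
  admissible PX W PY ->
  (forall Q : Y -> R, admissible PX W Q ->
     mutual_info (joint_YW PY W) <= mutual_info (joint_YW Q W)) ->
  (forall n (xn : n.-tuple X), is_pmf (enc n xn)) ->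
  (forall n (m : 'I_(Theta n)), is_pmf (dec n m)) ->
  (fun n : nat => ln (Theta n)%:R / n%:R) @ \oo --> mutual_info (joint_YW PY W) ->
  (fun n : nat =>
     tv_dist (protocol_joint PX (enc n) (dec n))
       (fun xn yn => marg_Y (protocol_joint PX (enc n) (dec n)) yn
                     * prod_channel W xn yn)) @ \oo --> 0 ->
  0 < c ->
  (* d must be real-valued where the source has mass *)
  (forall x y, 0 < PX x -> 0 < W x y) ->
  (fun n : nat =>
     avg_distortion (protocol_joint PX (enc n) (dec n)) (log_distortion c b W))
    @ \oo --> exp_distortion (joint_YW PY W) (log_distortion c b W).
Proof.
move=> HPX HW HA Hopt He Hd Hrate Htv c0 Hpos.
set kap := \sum_y PY y * kk W y.
set H0 := \sum_x PX x * ln (PX x).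
have Istar : mutual_info (joint_YW PY W) = kap - H0 by rewrite (mi_adm HW HA).
have Hv : forall Q : Y -> R, is_pmf Q -> (forall x, \sum_y Q y * W x y = PX x) ->
    kap <= \sum_y Q y * kk W y.
  move=> Q Qp Qa; have := Hopt Q (conj Qp Qa).
  rewrite Istar (mi_adm HW (conj Qp Qa)) -/H0 /kk; lra.
pose u n := uavg PX W (enc n) (dec n).
have Hu : u @ \oo --> kap.
  apply/cvgrPdist_le => e e0.
  have e20 : 0 < e / 2 by rewrite divr_gt0.
  have [d d0 Hd'] := lp_stab Hv _ e20.
  have Hr := (cvgrPdist_le _ _).1 Hrate e e0.
  set eta := Num.min (d / 2) (e / (4 * MM W + 4)).
  have M0 := MM_ge0 W.
  have eta0 : 0 < eta.
    by rewrite lt_min divr_gt0 //= divr_gt0 //; lra.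
  have Ht := (cvgrPdist_le _ _).1 Htv eta eta0.
  near=> n.
  have n0 : (0 < n)%N by near: n; exact: (nbhs_infty_gt 0).
  have [Hup [Q [Qp Qa Qlow]]] := bounds' HPX HW (He n) (Hd n) Hpos n0.
  have hr : `|mutual_info (joint_YW PY W) - ln (Theta n)%:R / n%:R| <= e.
    by near: n; apply: Hr.
  have ht : `|0 - tv_dist (protocol_joint PX (enc n) (dec n))
       (fun xn yn => marg_Y (protocol_joint PX (enc n) (dec n)) yn
                     * prod_channel W xn yn)| <= eta.
    by near: n; apply: Ht.
  move: Qa Qlow ht.
  set tv := tv_dist _ _ => Qa Qlow ht.
  have tv0 : 0 <= tv.
    rewrite /tv /tv_dist; apply: mulr_ge0; first by rewrite invr_ge0.
    by apply: sumr_ge0 => *; apply: sumr_ge0 => *.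
  rewrite sub0r normrN ger0_norm // in ht.
  have htd : tv <= d / 2 by apply: (le_trans ht); rewrite ge_min lexx.
  have hte : tv <= e / (4 * MM W + 4) by apply: (le_trans ht); rewrite ge_min lexx orbT.
  rewrite ler_pdivlMr in hte; last by lra.
  have td : 2 * tv <= d by lra.
  have Qk := Hd' Q Qp (fun a => le_trans (Qa a) td).
  rewrite Istar in hr.
  move: hr; rewrite ler_norml => /andP[hr1 hr2].
  rewrite ler_norml; apply/andP; split.
    rewrite /u; move: Hup; rewrite -/H0 => Hup; lra.
  rewrite /u; move: Qlow Qk; rewrite -/kap => Qlow Qk.
  have : MM W * tv <= e / 4 by nra.
  lra.
have Hlim : (fun n => (- c / ln 2) * u n + \sum_a PX a * b a) @ \oo -->
    (- c / ln 2) * kap + \sum_a PX a * b a.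
  apply: cvgD; first exact: cvgMl_tmp.
  exact: cvg_cst.
rewrite (exp_eq c b HA).
apply: cvg_trans Hlim; apply: near_eq_cvg; near=> n.
have n0 : (0 < n)%N by near: n; exact: (nbhs_infty_gt 0).
by rewrite /u (avg_eq' c b HPX (He n) (Hd n) n0).
Unshelve. all: by end_near.
Qed.
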